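(* Assume $\mu_1=\mu_2=\mu_3=1$ and $\rho_i+\rho_j\le1$ for all $i\neq j$. Then there are uncountably many triples of decision points $(d_1,d_2,d_3)\in(0,1)^3$ for which at least one of the decision points has infinitely many distinct pre-images.
   Context: Fix $\rho_1,\rho_2,\rho_3\in(0,1)$ with $\rho_1+\rho_2+\rho_3>1$, $\mu_i=1$, $\theta:=\rho_1+\rho_2+\rho_3-1$. $A_i^0:=\{y\in\mathbb R^3: y_1+y_2+y_3=1, y_i=0, y_l\ge0\}$, $A^0:=\bigcup_iA_i^0$; for $z\in A^0\setminus A_j^0$, $f_j(z):=\sum_{i\neq j}\frac{(1-\rho_j)z_i+\rho_i z_j}{(1-\rho_j)+\theta z_j}e_i$. For $(\hat i,\hat j,\hat k)$ equal to $(1,2,3)$ or a cyclic permutation, $(1-x)e_{\hat j}+xe_{\hat k}\in A^0_{\hat i}$ is written $(x,\hat i)$. Decision points $d_1,d_2,d_3\in(0,1)$ (identified with $(d_{\hat i},\hat i)$); switching rule $\mathfrak R((x,\hat i))=\hat j$ if $x<d_{\hat i}$, $\hat k$ if $x>d_{\hat i}$, both allowed if $x=d_{\hat i}$; $\varphi(z):=f_{\mathfrak R(z)}(z)$. A trajectory is $(z(t))$ with $z(t+1)\in\varphi(z(t))$; $z$ is a pre-image of $z'$ if some trajectory from $z$ has $z(t)=z'$ for some $t\ge1$. *)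

(* Defs.v *)
From Stdlib Require Import Reals Lra List.
Open Scope R_scope.

Inductive idx := i1 | i2 | i3.

Record pt := mkpt { c1 : R; c2 : R; c3 : R }.

Definition coord (z : pt) (i : idx) : R :=
  match i with i1 => c1 z | i2 => c2 z | i3 => c3 z end.

Definition e (i : idx) : pt :=
  match i with i1 => mkpt 1 0 0 | i2 => mkpt 0 1 0 | i3 => mkpt 0 0 1 end.

Definition padd (a b : pt) : pt := mkpt (c1 a + c1 b) (c2 a + c2 b) (c3 a + c3 b).
Definition pscale (s : R) (a : pt) : pt := mkpt (s * c1 a) (s * c2 a) (s * c3 a).

(* cyclic successor: (i^, j^, k^) = (i, nxt i, nxt (nxt i)) ranges over
   (1,2,3), (2,3,1), (3,1,2). *)
Definition nxt (i : idx) : idx := match i with i1 => i2 | i2 => i3 | i3 => i1 end.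

Definition rho (r1 r2 r3 : R) (i : idx) : R :=
  match i with i1 => r1 | i2 => r2 | i3 => r3 end.
Definition theta (r1 r2 r3 : R) : R := r1 + r2 + r3 - 1.

Definition A0i (i : idx) (y : pt) : Prop :=
  c1 y + c2 y + c3 y = 1 /\ coord y i = 0 /\
  0 <= c1 y /\ 0 <= c2 y /\ 0 <= c3 y.
Definition A0 (y : pt) : Prop := exists i, A0i i y.

(* f_j(z) = sum_{i <> j} ((1-rho_j) z_i + rho_i z_j)/((1-rho_j) + theta z_j) e_i,
   (used only for z in A^0 \ A_j^0) *)
Definition fj (r1 r2 r3 : R) (j : idx) (z : pt) : pt :=
  let rh := rho r1 r2 r3 in
  let cmp i := if (match i, j with
                   | i1, i1 | i2, i2 | i3, i3 => true | _, _ => false end)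
               then 0
               else ((1 - rh j) * coord z i + rh i * coord z j)
                      / ((1 - rh j) + theta r1 r2 r3 * coord z j) in
  mkpt (cmp i1) (cmp i2) (cmp i3).

(* the point (x, i^) := (1-x) e_{j^} + x e_{k^} of A^0_{i^} *)
Definition ptof (x : R) (i : idx) : pt :=
  padd (pscale (1 - x) (e (nxt i))) (pscale x (e (nxt (nxt i)))).

(* switching rule R as a relation: switch z j  <->  j is an allowed value of R(z);
   d i is the decision point d_i. *)
Definition switch (d : idx -> R) (z : pt) (j : idx) : Prop :=
  exists (i : idx) (x : R), 0 <= x <= 1 /\ z = ptof x i /\
    ((x < d i /\ j = nxt i) \/
     (x > d i /\ j = nxt (nxt i)) \/
     (x = d i /\ (j = nxt i \/ j = nxt (nxt i)))).

Definition phi (r1 r2 r3 : R) (d : idx -> R) (z w : pt) : Prop :=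
  exists j, switch d z j /\ w = fj r1 r2 r3 j z.

Definition trajectory (r1 r2 r3 : R) (d : idx -> R) (z : nat -> pt) : Prop :=
  forall t, phi r1 r2 r3 d (z t) (z (S t)).

Definition preimage (r1 r2 r3 : R) (d : idx -> R) (z z' : pt) : Prop :=
  exists traj : nat -> pt, trajectory r1 r2 r3 d traj /\ traj 0%nat = z /\
    exists t, (1 <= t)%nat /\ traj t = z'.

Definition infinite_pts (P : pt -> Prop) : Prop :=
  ~ exists l : list pt, forall z, P z -> In z l.

Definition dvec (d : R * R * R) (i : idx) : R :=
  match d with (d1, d2, d3) => match i with i1 => d1 | i2 => d2 | i3 => d3 end end.

Definition uncountable3 (S : R * R * R -> Prop) : Prop :=
  ~ exists g : R * R * R -> nat,
      forall a b, S a -> S b -> g a = g b -> a = b.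

(* Main.v *)
Require Import Defs.
From Stdlib Require Import Reals Lra Lia Psatz List ZArith ClassicalEpsilon Classical.
From Stdlib Require Import Arith.Cantor.
Open Scope R_scope.

Definition nstep (u : nat -> R) (n : nat) (p : R * R) : R * R :=
  let (a, b) := p in
  if Rlt_dec (u n) ((a + b) / 2) then (b - (b - a) / 3, b) else (a, a + (b - a) / 3).

Fixpoint nI (u : nat -> R) (l r : R) (n : nat) : R * R :=
  match n with O => (l, r) | S n => nstep u n (nI u l r n) end.

Lemma nstep_props u n a b : a < b ->
  let p := nstep u n (a, b) in
  fst p < snd p /\ a <= fst p /\ snd p <= b /\ (u n < fst p \/ u n > snd p).
Proof.
  intros Hab. unfold nstep. destruct (Rlt_dec _ _); simpl; lra.
Qed.

Lemma nI_props u l r : l < r -> forall n,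
  fst (nI u l r n) < snd (nI u l r n) /\
  fst (nI u l r n) <= fst (nI u l r (S n)) /\
  snd (nI u l r (S n)) <= snd (nI u l r n) /\
  (u n < fst (nI u l r (S n)) \/ u n > snd (nI u l r (S n))).
Proof.
  intros Hlr n.
  assert (H0 : forall n, fst (nI u l r n) < snd (nI u l r n)).
  { induction n0 as [|n0 IH]; [simpl; lra|].
    simpl. destruct (nI u l r n0) as [a b]. apply (nstep_props u n0 a b IH). }
  split; [apply H0|]. simpl. specialize (H0 n). destruct (nI u l r n) as [a b].
  destruct (nstep_props u n a b H0) as [_ [H2 [H3 H4]]]. simpl. auto.
Qed.

Lemma nI_mono u l r : l < r -> forall n m, (n <= m)%nat ->
  fst (nI u l r n) <= fst (nI u l r m) /\ snd (nI u l r m) <= snd (nI u l r n).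
Proof.
  intros Hlr n m Hnm. induction Hnm.
  - lra.
  - destruct (nI_props u l r Hlr m) as [_ [H2 [H3 _]]]. lra.
Qed.

Lemma avoid_seq (u : nat -> R) (l r : R) : l < r -> exists x, l <= x <= r /\ forall n, x <> u n.
Proof.
  intros Hlr.
  assert (Hg : Un_growing (fun n => fst (nI u l r n))).
  { intro n. destruct (nI_props u l r Hlr n) as [_ [H _]]. exact H. }
  assert (Hb : has_ub (fun n => fst (nI u l r n))).
  { exists r. intros y [n ->]. destruct (nI_mono u l r Hlr 0 n (Nat.le_0_l n)) as [_ H2].
    destruct (nI_props u l r Hlr n) as [H1 _]. simpl in H2. lra. }
  destruct (growing_cv _ Hg Hb) as [x Hx].
  assert (Hlo : forall n, fst (nI u l r n) <= x) by (apply growing_ineq; auto).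
  assert (Hhi : forall n, x <= snd (nI u l r n)).
  { intro n. apply Rle_cv_lim with (Un := fun m => fst (nI u l r m)) (Vn := fun _ => snd (nI u l r n)); auto.
    - intro m. destruct (Nat.le_ge_cases n m) as [Hm|Hm].
      + destruct (nI_mono u l r Hlr n m Hm) as [_ H2]. destruct (nI_props u l r Hlr m) as [H1 _]. lra.
      + destruct (nI_mono u l r Hlr m n Hm) as [H2 _]. destruct (nI_props u l r Hlr n) as [H1 _]. lra.
    - intros e He. exists 0%nat. intros. unfold Rdist. rewrite Rminus_diag, Rabs_R0. lra. }
  exists x. split.
  - specialize (Hlo 0%nat). specialize (Hhi 0%nat). simpl in *. lra.
  - intros n Heq. destruct (nI_props u l r Hlr n) as [_ [_ [_ H4]]].
    specialize (Hlo (S n)). specialize (Hhi (S n)). lra.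
Qed.

Lemma no_inj_interval (l r : R) (h : R -> nat) : l < r ->
  ~ (forall t t', l < t < r -> l < t' < r -> h t = h t' -> t = t').
Proof.
  intros Hlr Hinj.
  set (u := fun n => epsilon (inhabits 0) (fun t => l < t < r /\ h t = n)).
  assert (Hu : forall t, l < t < r -> u (h t) = t).
  { intros t Ht. assert (Hs : l < u (h t) < r /\ h (u (h t)) = h t).
    { unfold u. apply (epsilon_spec (inhabits 0) (fun t0 => l < t0 < r /\ h t0 = h t)). exists t; auto. }
    destruct Hs as [Hs1 Hs2]. apply Hinj; auto. }
  destruct (avoid_seq u (l + (r - l)/3) (r - (r - l)/3)) as [x [Hx Hne]]; [lra|].
  apply (Hne (h x)). symmetry. apply Hu. lra.
Qed.

Lemma exists_irrational : exists w, 1/3 < w < 1/2 /\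
  forall (p : nat) (C : Z), (1 <= p)%nat -> INR p * w <> IZR C.
Proof.
  set (u := fun n => let (c, p) := Cantor.of_nat n in INR c / INR p).
  destruct (avoid_seq u (1/3 + 1/100) (1/2 - 1/100)) as [w [Hw Hne]]; [lra|].
  exists w. split; [lra|].
  intros p C Hp Heq.
  assert (HpR : 1 <= INR p) by (apply (le_INR 1); auto).
  assert (HC : (0 <= C)%Z).
  { apply le_IZR. rewrite <- Heq. simpl. nra. }
  apply (Hne (Cantor.to_nat (Z.to_nat C, p))). unfold u. rewrite Cantor.cancel_of_to.
  rewrite INR_IZR_INZ, Z2Nat.id by auto. rewrite <- Heq. field. lra.
Qed.


Record CH (a b : R -> R) : Prop := {
  a_mono : forall u v, 0 <= u -> u <= v -> v <= 1 -> a u <= a v;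
  b_mono : forall u v, 0 <= u -> u <= v -> v <= 1 -> b u <= b v;
  a_inj : forall u v, 0 <= u <= 1 -> 0 <= v <= 1 -> a u = a v -> u = v;
  b_inj : forall u v, 0 <= u <= 1 -> 0 <= v <= 1 -> b u = b v -> u = v;
  a_lip : forall u v, 0 <= u <= 1 -> 0 <= v <= 1 -> Rabs (a u - a v) <= Rabs (u - v);
  b_lip : forall u v, 0 <= u <= 1 -> 0 <= v <= 1 -> Rabs (b u - b v) <= Rabs (u - v);
  a1 : a 1 <= 1;
  b0 : 0 <= b 0;
  ba : b 1 < a 0;
  a0pos : 0 < a 0;
  alt1 : forall u, 0 <= u < 1 -> a u < 1 }.

Definition fr (x : R) : R := x - IZR (Int_part x).

Lemma fr_range x : 0 <= fr x < 1.
Proof. unfold fr. destruct (base_Int_part x). lra. Qed.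

Lemma Int_part_eq x z : IZR z <= x < IZR z + 1 -> Int_part x = z.
Proof. intros H. symmetry. apply Int_part_spec. lra. Qed.

Lemma fr_shift_ge w x : 0 < w < 1 -> w <= fr x ->
  Int_part (x - w) = Int_part x /\ fr (x - w) = fr x - w.
Proof.
  intros Hw H. unfold fr in *. destruct (base_Int_part x).
  assert (E : Int_part (x - w) = Int_part x) by (apply Int_part_eq; lra).
  rewrite E. split; auto; ring.
Qed.

Lemma fr_shift_lt w x : 0 < w < 1 -> fr x < w ->
  Int_part (x - w) = (Int_part x - 1)%Z /\ fr (x - w) = fr x - w + 1.
Proof.
  intros Hw H. unfold fr in *. destruct (base_Int_part x).
  assert (E : Int_part (x - w) = (Int_part x - 1)%Z) by (apply Int_part_eq; rewrite minus_IZR; simpl; lra).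
  rewrite E. split; auto. rewrite minus_IZR. simpl. ring.
Qed.

Definition F (a b : R -> R) (w phi t : R) : R :=
  if Rlt_dec (fr phi) (1 - w) then a t else b t.

Lemma F_code_a a b w x t : 0 < w < 1 -> w <= fr x -> F a b w (x - w) t = a t.
Proof.
  intros Hw H. unfold F. destruct (fr_shift_ge w x Hw H) as [_ E]. rewrite E.
  destruct (Rlt_dec _ _); auto. pose proof (fr_range x). lra.
Qed.

Lemma F_code_b a b w x t : 0 < w < 1 -> fr x < w -> F a b w (x - w) t = b t.
Proof.
  intros Hw H. unfold F. destruct (fr_shift_lt w x Hw H) as [_ E]. rewrite E.
  destruct (Rlt_dec _ _); auto. pose proof (fr_range x). lra.
Qed.

Fixpoint ell (a b : R -> R) (w : R) (n : nat) (th : R) : R :=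
  match n with
  | O => 0
  | S n => F a b w (th - w) (ell a b w n (th - w))
  end.


Lemma F_range a b w phi t : CH a b -> 0 <= t <= 1 -> 0 <= F a b w phi t <= 1.
Proof.
  intros H Ht. unfold F. destruct (Rlt_dec _ _).
  - pose proof (a_mono a b H 0 t). pose proof (a_mono a b H t 1). pose proof (a0pos a b H).
    pose proof (a1 a b H). lra.
  - pose proof (b_mono a b H 0 t). pose proof (b_mono a b H t 1). pose proof (ba a b H).
    pose proof (b0 a b H). pose proof (a1 a b H). pose proof (a_mono a b H 0 1). lra.
Qed.

Lemma F_mono a b w phi u v : CH a b -> 0 <= u -> u <= v -> v <= 1 -> F a b w phi u <= F a b w phi v.
Proof.
  intros H. unfold F. destruct (Rlt_dec _ _); intros; [apply (a_mono a b H)|apply (b_mono a b H)]; auto.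
Qed.

Lemma F_lip a b w phi u v : CH a b -> 0 <= u <= 1 -> 0 <= v <= 1 ->
  Rabs (F a b w phi u - F a b w phi v) <= Rabs (u - v).
Proof.
  intros H. unfold F. destruct (Rlt_dec _ _); intros; [apply (a_lip a b H)|apply (b_lip a b H)]; auto.
Qed.

Lemma ell_range a b w : CH a b -> forall n th, 0 <= ell a b w n th <= 1.
Proof.
  intros H n. induction n as [|n IH]; intro th; simpl; [lra|]. apply F_range; auto.
Qed.

Lemma ell_grow a b w : CH a b -> forall n th, ell a b w n th <= ell a b w (S n) th.
Proof.
  intros H n. induction n as [|n IH]; intro th.
  - simpl. apply F_range; auto. lra.
  - change (F a b w (th - w) (ell a b w n (th - w)) <= F a b w (th - w) (ell a b w (S n) (th - w))).
    apply F_mono; auto; try apply ell_range; auto.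
Qed.

Lemma ell_mono a b w : CH a b -> 0 < w < 1 -> forall n x1 x2, fr x1 <= fr x2 ->
  ell a b w n x1 <= ell a b w n x2.
Proof.
  intros H Hw n. induction n as [|n IH]; intros x1 x2 Hx; simpl; [lra|].
  destruct (Rle_lt_dec w (fr x1)) as [H1|H1]; destruct (Rle_lt_dec w (fr x2)) as [H2|H2].
  - rewrite !F_code_a by auto. apply (a_mono a b H); try apply ell_range; auto.
    apply IH. destruct (fr_shift_ge w x1 Hw H1) as [_ ->]. destruct (fr_shift_ge w x2 Hw H2) as [_ ->]. lra.
  - lra.
  - rewrite F_code_b, F_code_a by auto.
    pose proof (ell_range a b w H n (x1 - w)). pose proof (ell_range a b w H n (x2 - w)).
    pose proof (b_mono a b H (ell a b w n (x1 - w)) 1). pose proof (a_mono a b H 0 (ell a b w n (x2 - w))).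
    pose proof (ba a b H). lra.
  - rewrite !F_code_b by auto. apply (b_mono a b H); try apply ell_range; auto.
    apply IH. destruct (fr_shift_lt w x1 Hw H1) as [_ ->]. destruct (fr_shift_lt w x2 Hw H2) as [_ ->]. lra.
Qed.

Definition xl (a b : R -> R) (w th : R) : R :=
  epsilon (inhabits 0) (fun l => Un_cv (fun n => ell a b w n th) l).

Lemma xl_cv a b w th : CH a b -> Un_cv (fun n => ell a b w n th) (xl a b w th).
Proof.
  intros H. unfold xl. apply (epsilon_spec (inhabits 0) (fun l => Un_cv (fun n => ell a b w n th) l)).
  assert (Hg : Un_growing (fun n => ell a b w n th)) by (intro n; apply ell_grow; auto).
  assert (Hb : has_ub (fun n => ell a b w n th)).
  { exists 1. intros y [n ->]. apply ell_range; auto. }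
  destruct (growing_cv _ Hg Hb) as [l Hl]. exists l; auto.
Qed.

Lemma xl_range a b w th : CH a b -> 0 <= xl a b w th <= 1.
Proof.
  intros H. pose proof (xl_cv a b w th H) as Hc. split.
  - apply Rle_trans with (ell a b w 0 th); [simpl; lra|].
    apply (growing_ineq (fun n => ell a b w n th)); auto. intro n; apply ell_grow; auto.
  - apply Rle_cv_lim with (Un := fun n => ell a b w n th) (Vn := fun _ => 1); auto.
    + intro n. apply ell_range; auto.
    + intros e He. exists 0%nat. intros. unfold Rdist. rewrite Rminus_diag, Rabs_R0. lra.
Qed.

Lemma xl_eq a b w th : CH a b -> xl a b w th = F a b w (th - w) (xl a b w (th - w)).
Proof.
  intros H. apply UL_sequence with (Un := fun n => ell a b w (S n) th).
  - intros e He. destruct (xl_cv a b w th H e He) as [N HN]. exists N. intros n Hn. apply HN. lia.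
  - intros e He. destruct (xl_cv a b w (th - w) H e He) as [N HN]. exists N. intros n Hn.
    specialize (HN n Hn). unfold Rdist in *. simpl.
    eapply Rle_lt_trans; [apply F_lip; auto; try apply ell_range; try apply xl_range; auto|]. auto.
Qed.

Lemma xl_mono a b w x1 x2 : CH a b -> 0 < w < 1 -> fr x1 <= fr x2 -> xl a b w x1 <= xl a b w x2.
Proof.
  intros H Hw Hx. apply Rle_cv_lim with (Un := fun n => ell a b w n x1) (Vn := fun n => ell a b w n x2);
    try apply xl_cv; auto.
  intro n. apply ell_mono; auto.
Qed.

Lemma xl_hi a b w x : CH a b -> 0 < w < 1 -> w <= fr x -> a 0 <= xl a b w x.
Proof.
  intros H Hw Hx. rewrite xl_eq by auto. rewrite F_code_a by auto.
  apply (a_mono a b H); try apply xl_range; auto; lra.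
Qed.

Lemma xl_lo a b w x : CH a b -> 0 < w < 1 -> fr x < w -> xl a b w x <= b 1.
Proof.
  intros H Hw Hx. rewrite xl_eq by auto. rewrite F_code_b by auto.
  apply (b_mono a b H); try apply xl_range; auto; lra.
Qed.

Definition ys (a b : R -> R) (w : R) (k : nat) : R := xl a b w (1 - w - INR k * w).
Definition Dk (w : R) (k : nat) : Z := Int_part (1 - w - INR k * w).

Lemma phiS w k : 1 - w - INR (S k) * w = (1 - w - INR k * w) - w.
Proof. rewrite S_INR. ring. Qed.

Lemma ys_step a b w k : CH a b -> ys a b w k = F a b w ((1 - w - INR k * w) - w) (ys a b w (S k)).
Proof. intros H. unfold ys. rewrite phiS. apply xl_eq; auto. Qed.

Lemma fr_th0 w : 0 < w < 1 -> fr (1 - w - INR 0 * w) = 1 - w.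
Proof.
  intros Hw. unfold fr. simpl. rewrite (Int_part_eq _ 0%Z); simpl; lra.
Qed.

Lemma ys_branch a b w k : CH a b -> 0 < w < 1 ->
  (ys a b w k = a (ys a b w (S k)) /\ ys a b w (S k) <= ys a b w 0) \/
  (ys a b w k = b (ys a b w (S k)) /\ ys a b w 0 <= ys a b w (S k)).
Proof.
  intros H Hw. rewrite ys_step by auto. unfold F. rewrite <- phiS.
  destruct (Rlt_dec _ _) as [Hl|Hl].
  - left. split; auto. unfold ys. apply xl_mono; auto. rewrite fr_th0 by auto. lra.
  - right. split; auto. unfold ys. apply xl_mono; auto. rewrite fr_th0 by auto. lra.
Qed.

Lemma D_step_ge w k : 0 < w < 1 -> w <= fr (1 - w - INR k * w) -> Dk w (S k) = Dk w k.
Proof. intros Hw H. unfold Dk. rewrite phiS. apply fr_shift_ge; auto. Qed.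

Lemma D_step_lt w k : 0 < w < 1 -> fr (1 - w - INR k * w) < w -> Dk w (S k) = (Dk w k - 1)%Z.
Proof. intros Hw H. unfold Dk. rewrite phiS. apply fr_shift_lt; auto. Qed.

Lemma ys_det a b w m n : CH a b -> 0 < w < 1 -> ys a b w m = ys a b w n ->
  ys a b w (S m) = ys a b w (S n) /\ (Dk w (S m) - Dk w m = Dk w (S n) - Dk w n)%Z.
Proof.
  intros H Hw E. pose proof (ys_step a b w m H) as Sm. pose proof (ys_step a b w n H) as Sn.
  pose proof (ba a b H) as Hba.
  assert (Rm : forall k, 0 <= ys a b w (S k) <= 1) by (intro; apply xl_range; auto).
  destruct (Rle_lt_dec w (fr (1 - w - INR m * w))) as [H1|H1];
  destruct (Rle_lt_dec w (fr (1 - w - INR n * w))) as [H2|H2].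
  - rewrite F_code_a in Sm, Sn by auto. split.
    + apply (a_inj a b H); auto. congruence.
    + rewrite !D_step_ge by auto. lia.
  - exfalso. pose proof (xl_hi a b w _ H Hw H1). pose proof (xl_lo a b w _ H Hw H2).
    unfold ys in E. lra.
  - exfalso. pose proof (xl_lo a b w _ H Hw H1). pose proof (xl_hi a b w _ H Hw H2).
    unfold ys in E. lra.
  - rewrite F_code_b in Sm, Sn by auto. split.
    + apply (b_inj a b H); auto. congruence.
    + rewrite !D_step_lt by auto. lia.
Qed.

Lemma ys_per a b w m n : CH a b -> 0 < w < 1 -> ys a b w m = ys a b w n ->
  forall j, ys a b w (m + j) = ys a b w (n + j) /\
    (Dk w (S (m + j)) - Dk w (m + j) = Dk w (S (n + j)) - Dk w (n + j))%Z.
Proof.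
  intros H Hw E.
  assert (Y : forall j, ys a b w (m + j) = ys a b w (n + j)).
  { intro j. induction j as [|j IH].
    - rewrite !Nat.add_0_r. auto.
    - rewrite !Nat.add_succ_r. apply (ys_det a b w _ _ H Hw IH). }
  intro j. split; auto. apply (ys_det a b w _ _ H Hw (Y j)).
Qed.

Lemma E_const w m n : (forall j, (Dk w (S (m + j)) - Dk w (m + j) = Dk w (S (n + j)) - Dk w (n + j))%Z) ->
  forall j, (Dk w (m + j) - Dk w (n + j) = Dk w m - Dk w n)%Z.
Proof.
  intros H j. induction j as [|j IH].
  - rewrite !Nat.add_0_r. lia.
  - rewrite !Nat.add_succ_r. specialize (H j). lia.
Qed.

Lemma N_mult w m n C : (m <= n)%nat -> (forall j, (Dk w (m + j) - Dk w (n + j) = C)%Z) ->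
  forall N, (Dk w m - Dk w (m + N * (n - m)) = Z.of_nat N * C)%Z.
Proof.
  intros Hmn H N. induction N as [|N IH].
  - simpl. rewrite Nat.add_0_r. lia.
  - replace (m + S N * (n - m))%nat with (n + N * (n - m))%nat by lia.
    specialize (H (N * (n - m))%nat). rewrite Nat2Z.inj_succ. lia.
Qed.

Lemma D_bounds w k : IZR (Dk w k) <= 1 - w - INR k * w < IZR (Dk w k) + 1.
Proof. unfold Dk. destruct (base_Int_part (1 - w - INR k * w)). lra. Qed.

Lemma approx_eq (x y : R) : (forall N : nat, Rabs (INR N * x - INR N * y) < 1) -> x = y.
Proof.
  intros H. destruct (Req_dec x y) as [|Hne]; auto. exfalso.
  set (e := Rabs (x - y)). assert (He : 0 < e) by (apply Rabs_pos_lt; lra).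
  destruct (archimed (/ e)) as [H1 _].
  assert (Hup : (0 <= up (/ e))%Z).
  { apply le_IZR. pose proof (Rinv_0_lt_compat e He). simpl. lra. }
  pose proof (Rinv_0_lt_compat e He) as Hie.
  specialize (H (Z.to_nat (up (/ e)))).
  rewrite INR_IZR_INZ, Z2Nat.id in H by auto.
  rewrite <- Rmult_minus_distr_l, Rabs_mult, (Rabs_right (IZR _)) in H by lra.
  fold e in H. apply Rmult_lt_compat_r with (r := e) in H1; auto.
  rewrite Rinv_l in H1 by lra. lra.
Qed.

Theorem core a b w : CH a b -> 1/3 < w < 1/2 ->
  (forall (p : nat) (C : Z), (1 <= p)%nat -> INR p * w <> IZR C) ->
  0 < ys a b w 0 < 1 /\ (forall k, 0 <= ys a b w k <= 1) /\
  (forall m n, (m < n)%nat -> ys a b w m <> ys a b w n) /\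
  (forall k, (ys a b w k = a (ys a b w (S k)) /\ ys a b w (S k) < ys a b w 0) \/
             (ys a b w k = b (ys a b w (S k)) /\ ys a b w 0 < ys a b w (S k))).
Proof.
  intros H Hw Hirr. assert (Hw1 : 0 < w < 1) by lra.
  assert (Hdist : forall m n, (m < n)%nat -> ys a b w m <> ys a b w n).
  { intros m n Hmn E. pose proof (ys_per a b w m n H Hw1 E) as P.
    assert (P2 := fun j => proj2 (P j)).
    pose proof (E_const w m n P2) as Ec.
    pose proof (N_mult w m n _ (Nat.lt_le_incl _ _ Hmn) Ec) as NM.
    apply (Hirr (n - m)%nat (Dk w m - Dk w n)%Z); [lia|].
    apply approx_eq. intro N. specialize (NM N).
    assert (HZ := f_equal IZR NM). rewrite minus_IZR, mult_IZR, <- INR_IZR_INZ in HZ.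
    pose proof (D_bounds w m) as B1. pose proof (D_bounds w (m + N * (n - m))) as B2.
    rewrite plus_INR, mult_INR in B2.
    apply Rabs_def1.
    - assert (INR N * IZR (Dk w m - Dk w n) = IZR (Dk w m) - IZR (Dk w (m + N * (n - m)))) by lra.
      nra.
    - assert (INR N * IZR (Dk w m - Dk w n) = IZR (Dk w m) - IZR (Dk w (m + N * (n - m)))) by lra.
      nra. }
  split; [|split; [intro k; apply xl_range; auto|split; [exact Hdist|]]].
  - assert (Hy0 : ys a b w 0 = a (xl a b w (1 - w - INR 0 * w - w))).
    { unfold ys. rewrite xl_eq at 1 by auto. apply F_code_a; auto. rewrite fr_th0; lra. }
    assert (Hx : xl a b w (1 - w - INR 0 * w - w) <= b 1).
    { apply xl_lo; auto. unfold fr. simpl. rewrite (Int_part_eq _ 0%Z); simpl; lra. }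
    pose proof (xl_range a b w (1 - w - INR 0 * w - w) H).
    pose proof (ba a b H). pose proof (a_mono a b H 0 1). pose proof (a1 a b H).
    rewrite Hy0. split.
    + pose proof (a_mono a b H 0 (xl a b w (1 - w - INR 0 * w - w))). pose proof (a0pos a b H). lra.
    + apply (alt1 a b H). lra.
  - intro k. destruct (ys_branch a b w k H Hw1) as [[E1 E2]|[E1 E2]]; [left|right]; split; auto.
    + destruct E2 as [E2|E2]; auto. exfalso. apply (Hdist 0%nat (S k)); [lia|auto].
    + destruct E2 as [E2|E2]; auto. exfalso. apply (Hdist 0%nat (S k)); [lia|auto].
Qed.


Definition hm (T p q t : R) : R := p * t / (q + T * t).

Lemma den_pos T q t : 0 < T -> 0 < q -> 0 <= t -> 0 < q + T * t.
Proof. intros. assert (0 <= T * t) by (apply Rmult_le_pos; lra). lra. Qed.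

Lemma hm_diff T p q u v : 0 < T -> 0 < p <= q -> 0 <= u -> 0 <= v ->
  hm T p q v - hm T p q u = p * q * (v - u) / ((q + T * u) * (q + T * v)).
Proof.
  intros. pose proof (den_pos T q u). pose proof (den_pos T q v).
  unfold hm. field. split; lra.
Qed.

Lemma hm_ml T p q u v : 0 < T -> 0 < p <= q -> 0 <= u -> u <= v -> v <= 1 ->
  0 <= hm T p q v - hm T p q u <= v - u.
Proof.
  intros HT Hp Hu Huv Hv. rewrite hm_diff by lra.
  pose proof (den_pos T q u HT ltac:(lra) Hu) as HD1.
  pose proof (den_pos T q v HT ltac:(lra) ltac:(lra)) as HD2.
  assert (HD : 0 < (q + T * u) * (q + T * v)) by (apply Rmult_lt_0_compat; auto).
  assert (Hn : 0 <= p * q * (v - u)) by (apply Rmult_le_pos; [apply Rmult_le_pos|]; lra).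
  split.
  - apply Rmult_le_pos; auto. left. apply Rinv_0_lt_compat. auto.
  - apply Rmult_le_reg_r with ((q + T * u) * (q + T * v)); auto.
    unfold Rdiv. rewrite Rmult_assoc, Rinv_l by lra.
    assert (E : (q + T * u) * (q + T * v) = q * q + (q * T * u + q * T * v + T * T * u * v)) by ring.
    assert (0 <= q * T * u) by (apply Rmult_le_pos; [apply Rmult_le_pos|]; lra).
    assert (0 <= q * T * v) by (apply Rmult_le_pos; [apply Rmult_le_pos|]; lra).
    assert (0 <= T * T * u * v) by (apply Rmult_le_pos; [apply Rmult_le_pos; [apply Rmult_le_pos|]|]; lra).
    assert (p * q <= q * q) by (apply Rmult_le_compat_r; lra).
    rewrite Rmult_1_r. rewrite E.
    assert (A1 : p * q * (v - u) <= q * q * (v - u)) by (apply Rmult_le_compat_r; lra).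
    assert (A2 : 0 <= (v - u) * (q * T * u + q * T * v + T * T * u * v)) by (apply Rmult_le_pos; lra).
    assert (A3 : (v - u) * (q * q + (q * T * u + q * T * v + T * T * u * v)) =
      q * q * (v - u) + (v - u) * (q * T * u + q * T * v + T * T * u * v)) by ring.
    lra.
Qed.

Lemma hm_strict T p q u v : 0 < T -> 0 < p <= q -> 0 <= u -> u < v -> v <= 1 ->
  hm T p q u < hm T p q v.
Proof.
  intros HT Hp Hu Huv Hv. apply Rlt_0_minus. rewrite hm_diff by lra.
  pose proof (den_pos T q u HT ltac:(lra) Hu) as HD1.
  pose proof (den_pos T q v HT ltac:(lra) ltac:(lra)) as HD2.
  apply Rdiv_lt_0_compat.
  - apply Rmult_lt_0_compat; [apply Rmult_lt_0_compat|]; lra.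
  - apply Rmult_lt_0_compat; auto.
Qed.

Lemma hm_range T p q t : 0 < T -> 0 < p <= q -> 0 <= t <= 1 -> 0 <= hm T p q t < 1.
Proof.
  intros HT Hp Ht. pose proof (den_pos T q t HT ltac:(lra) ltac:(lra)) as HD.
  unfold hm. split.
  - unfold Rdiv; apply Rmult_le_pos; [apply Rmult_le_pos; lra| left; apply Rinv_0_lt_compat; lra].
  - apply Rmult_lt_reg_r with (q + T * t); auto. unfold Rdiv. rewrite Rmult_assoc, Rinv_l by lra.
    assert (p * t <= q * t) by (apply Rmult_le_compat_r; lra).
    assert (q * t <= q) by (rewrite <- (Rmult_1_r q) at 2; apply Rmult_le_compat_l; lra).
    assert (0 <= T * t) by (apply Rmult_le_pos; lra).
    destruct (Req_dec t 0) as [->|Ht0].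
    + rewrite !Rmult_0_r. lra.
    + assert (0 < T * t) by (apply Rmult_lt_0_compat; lra). lra.
Qed.

Lemma hm_pos T p q t : 0 < T -> 0 < p <= q -> 0 < t <= 1 -> 0 < hm T p q t.
Proof.
  intros. pose proof (den_pos T q t). unfold hm. apply Rdiv_lt_0_compat.
  apply Rmult_lt_0_compat; lra. lra.
Qed.

Lemma hm_0 T p q : hm T p q 0 = 0.
Proof. unfold hm. unfold Rdiv. ring. Qed.

Lemma hm_mono T p q u v : 0 < T -> 0 < p <= q -> 0 <= u -> u <= v -> v <= 1 -> hm T p q u <= hm T p q v.
Proof. intros. pose proof (hm_ml T p q u v). lra. Qed.

Lemma hm_inj T p q u v : 0 < T -> 0 < p <= q -> 0 <= u <= 1 -> 0 <= v <= 1 -> hm T p q u = hm T p q v -> u = v.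
Proof.
  intros. destruct (Rtotal_order u v) as [Hc|[Hc|Hc]]; auto.
  - pose proof (hm_strict T p q u v). lra.
  - pose proof (hm_strict T p q v u). lra.
Qed.

Lemma hm_lip T p q u v : 0 < T -> 0 < p <= q -> 0 <= u <= 1 -> 0 <= v <= 1 ->
  Rabs (hm T p q u - hm T p q v) <= Rabs (u - v).
Proof.
  intros. destruct (Rle_dec u v).
  - pose proof (hm_ml T p q u v). rewrite (Rabs_left1 (u - v)) by lra.
    rewrite Rabs_left1; lra.
  - pose proof (hm_ml T p q v u). rewrite (Rabs_right (u - v)) by lra.
    rewrite Rabs_right; lra.
Qed.

Lemma hm_1 T p q : hm T p q 1 = p / (q + T).
Proof. unfold hm. rewrite !Rmult_1_r. auto. Qed.

Definition Ha (r1 r2 r3 : R) (x : R) : R :=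
  hm (theta r1 r2 r3) r2 (1 - r1) (hm (theta r1 r2 r3) r1 (1 - r2) x).
Definition amap (r1 r2 r3 : R) (x : R) : R := 1 - Ha r1 r2 r3 (1 - x).
Definition bmap (r1 r2 r3 : R) (x : R) : R :=
  hm (theta r1 r2 r3) r3 (1 - r1) (hm (theta r1 r2 r3) r1 (1 - r3) x).

Lemma CH_inst r1 r2 r3 : 0 < r1 < 1 -> 0 < r2 < 1 -> 0 < r3 < 1 -> r1 + r2 + r3 > 1 ->
  r1 + r2 <= 1 -> r1 + r3 <= 1 -> r2 + r3 <= 1 -> CH (amap r1 r2 r3) (bmap r1 r2 r3).
Proof.
  intros h1 h2 h3 hs h12 h13 h23.
  set (T := theta r1 r2 r3). assert (HT : 0 < T) by (unfold T, theta; lra).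
  assert (P1 : 0 < r2 <= 1 - r1) by lra. assert (P2 : 0 < r1 <= 1 - r2) by lra.
  assert (P3 : 0 < r3 <= 1 - r1) by lra. assert (P4 : 0 < r1 <= 1 - r3) by lra.
  assert (R1 : forall t, 0 <= t <= 1 -> 0 <= hm T r1 (1 - r2) t < 1) by (intros; apply hm_range; auto).
  assert (R2 : forall t, 0 <= t <= 1 -> 0 <= hm T r1 (1 - r3) t < 1) by (intros; apply hm_range; auto).
  assert (R3 : forall t, 0 <= t <= 1 -> 0 <= hm T r2 (1 - r1) t < 1) by (intros; apply hm_range; auto).
  assert (R4 : forall t, 0 <= t <= 1 -> 0 <= hm T r3 (1 - r1) t < 1) by (intros; apply hm_range; auto).
  unfold amap, Ha, bmap; fold T.
  constructor.
  - intros u v Hu Huv Hv. pose proof (R1 (1 - v) ltac:(lra)). pose proof (R1 (1 - u) ltac:(lra)).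
    pose proof (hm_mono T r1 (1 - r2) (1 - v) (1 - u) HT P2 ltac:(lra) ltac:(lra) ltac:(lra)).
    pose proof (hm_mono T r2 (1 - r1) (hm T r1 (1 - r2) (1 - v)) (hm T r1 (1 - r2) (1 - u)) HT P1 ltac:(lra) H1 ltac:(lra)). lra.
  - intros u v Hu Huv Hv. pose proof (R2 u ltac:(lra)). pose proof (R2 v ltac:(lra)).
    pose proof (hm_mono T r1 (1 - r3) u v HT P4 ltac:(lra) ltac:(lra) ltac:(lra)).
    apply hm_mono; auto; lra.
  - intros u v Hu Hv E. pose proof (R1 (1 - v) ltac:(lra)). pose proof (R1 (1 - u) ltac:(lra)).
    assert (E2 : hm T r1 (1 - r2) (1 - u) = hm T r1 (1 - r2) (1 - v)).
    { apply (hm_inj T r2 (1 - r1)); auto; lra. }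
    apply hm_inj in E2; auto; lra.
  - intros u v Hu Hv E. pose proof (R2 v ltac:(lra)). pose proof (R2 u ltac:(lra)).
    apply hm_inj in E; auto; try lra. apply hm_inj in E; auto; lra.
  - intros u v Hu Hv. pose proof (R1 (1 - v) ltac:(lra)). pose proof (R1 (1 - u) ltac:(lra)).
    replace (1 - hm T r2 (1 - r1) (hm T r1 (1 - r2) (1 - u)) - (1 - hm T r2 (1 - r1) (hm T r1 (1 - r2) (1 - v))))
      with (hm T r2 (1 - r1) (hm T r1 (1 - r2) (1 - v)) - hm T r2 (1 - r1) (hm T r1 (1 - r2) (1 - u))) by ring.
    eapply Rle_trans; [apply hm_lip; auto; lra|].
    eapply Rle_trans; [apply hm_lip; auto; lra|].
    right. f_equal. ring.
  - intros u v Hu Hv. pose proof (R2 v ltac:(lra)). pose proof (R2 u ltac:(lra)).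
    eapply Rle_trans; [apply hm_lip; auto; lra|]. apply hm_lip; auto.
  - pose proof (R1 (1 - 1) ltac:(lra)). pose proof (R3 _ (conj (proj1 H) (Rlt_le _ _ (proj2 H)))). lra.
  - rewrite !hm_0. lra.
  - replace (1 - 0) with 1 by ring.
    pose proof (R1 1 ltac:(lra)) as A1. pose proof (R2 1 ltac:(lra)) as A2.
    pose proof (hm_strict T r2 (1 - r1) (hm T r1 (1 - r2) 1) 1 HT P1 (proj1 A1) (proj2 A1) ltac:(lra)) as S1.
    pose proof (hm_strict T r3 (1 - r1) (hm T r1 (1 - r3) 1) 1 HT P3 (proj1 A2) (proj2 A2) ltac:(lra)) as S2.
    rewrite (hm_1 T r2 (1 - r1)) in S1. rewrite (hm_1 T r3 (1 - r1)) in S2.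
    assert (E : r2 / (1 - r1 + T) + r3 / (1 - r1 + T) = 1).
    { unfold T, theta. field. lra. }
    lra.
  - replace (1 - 0) with 1 by ring. pose proof (R1 1 ltac:(lra)) as A1.
    pose proof (R3 _ (conj (proj1 A1) (Rlt_le _ _ (proj2 A1)))). lra.
  - intros u Hu. pose proof (R1 (1 - u) ltac:(lra)).
    pose proof (hm_pos T r1 (1 - r2) (1 - u) HT P2 ltac:(lra)).
    pose proof (hm_pos T r2 (1 - r1) _ HT P1 (conj H0 (Rlt_le _ _ (proj2 H)))). lra.
Qed.


Ltac fstep T q t :=
  let H := fresh in
  pose proof (den_pos T q t ltac:(unfold theta; lra) ltac:(lra) ltac:(lra)) as H;
  unfold fj, ptof, hm, padd, pscale, e, coord, rho, theta in *; simpl;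
  f_equal; field; lra.

Lemma fs1 r1 r2 r3 u : 0 < r1 < 1 -> 0 < r2 < 1 -> 0 < r3 < 1 -> r1 + r2 + r3 > 1 -> 0 <= u <= 1 ->
  fj r1 r2 r3 i2 (ptof u i1) = ptof (hm (theta r1 r2 r3) r1 (1 - r2) (1 - u)) i2.
Proof. intros. fstep (theta r1 r2 r3) (1 - r2) (1 - u). Qed.

Lemma fs2 r1 r2 r3 u : 0 < r1 < 1 -> 0 < r2 < 1 -> 0 < r3 < 1 -> r1 + r2 + r3 > 1 -> 0 <= u <= 1 ->
  fj r1 r2 r3 i3 (ptof u i1) = ptof (1 - hm (theta r1 r2 r3) r1 (1 - r3) u) i3.
Proof. intros. fstep (theta r1 r2 r3) (1 - r3) u. Qed.

Lemma fs3 r1 r2 r3 v : 0 < r1 < 1 -> 0 < r2 < 1 -> 0 < r3 < 1 -> r1 + r2 + r3 > 1 -> 0 <= v <= 1 ->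
  fj r1 r2 r3 i1 (ptof v i2) = ptof (1 - hm (theta r1 r2 r3) r2 (1 - r1) v) i1.
Proof. intros. fstep (theta r1 r2 r3) (1 - r1) v. Qed.

Lemma fs4 r1 r2 r3 v : 0 < r1 < 1 -> 0 < r2 < 1 -> 0 < r3 < 1 -> r1 + r2 + r3 > 1 -> 0 <= v <= 1 ->
  fj r1 r2 r3 i1 (ptof v i3) = ptof (hm (theta r1 r2 r3) r3 (1 - r1) (1 - v)) i1.
Proof. intros. fstep (theta r1 r2 r3) (1 - r1) (1 - v). Qed.

Definition gmap (r1 r2 r3 dl : R) (u : R) : R :=
  if Rle_dec u dl then amap r1 r2 r3 u else bmap r1 r2 r3 u.
Definition mid (r1 r2 r3 dl : R) (u : R) : pt :=
  if Rle_dec u dl then ptof (hm (theta r1 r2 r3) r1 (1 - r2) (1 - u)) i2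
  else ptof (1 - hm (theta r1 r2 r3) r1 (1 - r3) u) i3.
Fixpoint itg (r1 r2 r3 dl : R) (n : nat) (u : R) : R :=
  match n with O => u | S n => gmap r1 r2 r3 dl (itg r1 r2 r3 dl n u) end.
Definition tr (r1 r2 r3 dl : R) (u : R) (t : nat) : pt :=
  if Nat.even t then ptof (itg r1 r2 r3 dl (Nat.div2 t) u) i1
  else mid r1 r2 r3 dl (itg r1 r2 r3 dl (Nat.div2 t) u).

Lemma parity n : Nat.even (2 * n) = true /\ Nat.div2 (2 * n) = n /\
  Nat.even (S (2 * n)) = false /\ Nat.div2 (S (2 * n)) = n.
Proof.
  induction n as [|n IH]; [simpl; auto|].
  replace (2 * S n)%nat with (S (S (2 * n))) by lia.
  destruct IH as [A [B [C D]]]. repeat split.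
  - change (Nat.even (2 * n) = true). exact A.
  - change (S (Nat.div2 (2 * n)) = S n). rewrite B. auto.
  - change (Nat.even (S (2 * n)) = false). exact C.
  - change (S (Nat.div2 (S (2 * n))) = S n). rewrite D. auto.
Qed.

Lemma tr_even r1 r2 r3 dl u n : tr r1 r2 r3 dl u (2 * n) = ptof (itg r1 r2 r3 dl n u) i1.
Proof. unfold tr. destruct (parity n) as [A [B _]]. rewrite A, B. auto. Qed.

Lemma tr_odd r1 r2 r3 dl u n : tr r1 r2 r3 dl u (S (2 * n)) = mid r1 r2 r3 dl (itg r1 r2 r3 dl n u).
Proof. unfold tr. destruct (parity n) as [_ [_ [C D]]]. rewrite C, D. auto. Qed.


Lemma gmap_range r1 r2 r3 dl u : 0 < r1 < 1 -> 0 < r2 < 1 -> 0 < r3 < 1 -> r1 + r2 + r3 > 1 ->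
  r1 + r2 <= 1 -> r1 + r3 <= 1 -> r2 + r3 <= 1 -> 0 <= u <= 1 -> 0 <= gmap r1 r2 r3 dl u <= 1.
Proof.
  intros h1 h2 h3 hs h12 h13 h23 hu.
  assert (HT : 0 < theta r1 r2 r3) by (unfold theta; lra).
  unfold gmap, amap, Ha, bmap. destruct (Rle_dec _ _).
  - pose proof (hm_range (theta r1 r2 r3) r1 (1 - r2) (1 - u) HT ltac:(lra) ltac:(lra)) as A.
    pose proof (hm_range (theta r1 r2 r3) r2 (1 - r1) _ HT ltac:(lra) (conj (proj1 A) (Rlt_le _ _ (proj2 A)))). lra.
  - pose proof (hm_range (theta r1 r2 r3) r1 (1 - r3) u HT ltac:(lra) ltac:(lra)) as A.
    pose proof (hm_range (theta r1 r2 r3) r3 (1 - r1) _ HT ltac:(lra) (conj (proj1 A) (Rlt_le _ _ (proj2 A)))). lra.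
Qed.

Lemma itg_range r1 r2 r3 dl u n : 0 < r1 < 1 -> 0 < r2 < 1 -> 0 < r3 < 1 -> r1 + r2 + r3 > 1 ->
  r1 + r2 <= 1 -> r1 + r3 <= 1 -> r2 + r3 <= 1 -> 0 <= u <= 1 -> 0 <= itg r1 r2 r3 dl n u <= 1.
Proof. intros. induction n; simpl; auto. apply gmap_range; auto. Qed.

Definition d3of (r1 r2 r3 dl : R) : R := (1 - hm (theta r1 r2 r3) r1 (1 - r3) dl + 1) / 2.

Lemma phi_even r1 r2 r3 dl s u : 0 < r1 < 1 -> 0 < r2 < 1 -> 0 < r3 < 1 -> r1 + r2 + r3 > 1 ->
  0 <= u <= 1 ->
  phi r1 r2 r3 (dvec (dl, s, d3of r1 r2 r3 dl)) (ptof u i1) (mid r1 r2 r3 dl u).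
Proof.
  intros h1 h2 h3 hs hu. unfold mid. destruct (Rle_dec u dl) as [Hl|Hl].
  - exists i2. split.
    + exists i1, u. split; auto. split; auto. simpl.
      destruct Hl as [Hl|Hl]; [left; auto|right; right; auto].
    + symmetry. apply fs1; auto.
  - exists i3. split.
    + exists i1, u. split; auto. split; auto. simpl. right; left. split; auto. lra.
    + symmetry. apply fs2; auto.
Qed.

Lemma phi_odd r1 r2 r3 dl s u : 0 < r1 < 1 -> 0 < r2 < 1 -> 0 < r3 < 1 -> r1 + r2 + r3 > 1 ->
  r1 + r2 <= 1 -> r1 + r3 <= 1 -> r2 + r3 <= 1 -> 0 < dl < 1 ->
  0 < s < hm (theta r1 r2 r3) r1 (1 - r2) (1 - dl) ->
  0 <= u <= 1 ->
  phi r1 r2 r3 (dvec (dl, s, d3of r1 r2 r3 dl)) (mid r1 r2 r3 dl u) (ptof (gmap r1 r2 r3 dl u) i1).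
Proof.
  intros h1 h2 h3 hs h12 h13 h23 hd Hs hu.
  assert (HT : 0 < theta r1 r2 r3) by (unfold theta; lra).
  unfold mid, gmap. destruct (Rle_dec u dl) as [Hl|Hl].
  - set (v := hm (theta r1 r2 r3) r1 (1 - r2) (1 - u)).
    assert (Hv : 0 <= v < 1) by (apply hm_range; auto; lra).
    assert (Hv2 : hm (theta r1 r2 r3) r1 (1 - r2) (1 - dl) <= v) by (apply hm_mono; auto; lra).
    exists i1. split.
    + exists i2, v. split; [lra|]. split; auto. simpl. right; left. split; auto. lra.
    + rewrite fs3 by (auto; lra). unfold amap, Ha. reflexivity.
  - set (v := 1 - hm (theta r1 r2 r3) r1 (1 - r3) u).
    pose proof (hm_range (theta r1 r2 r3) r1 (1 - r3) u HT ltac:(lra) hu) as Hv.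
    assert (Hv2 : hm (theta r1 r2 r3) r1 (1 - r3) dl <= hm (theta r1 r2 r3) r1 (1 - r3) u)
      by (apply hm_mono; auto; lra).
    pose proof (hm_range (theta r1 r2 r3) r1 (1 - r3) dl HT ltac:(lra) ltac:(lra)) as Hd.
    exists i1. split.
    + exists i3, v. unfold v. split; [lra|]. split; auto. simpl. left. split; auto.
      pose proof (hm_pos (theta r1 r2 r3) r1 (1 - r3) dl HT ltac:(lra) ltac:(lra)).
      unfold d3of. lra.
    + rewrite fs4 by (unfold v; auto; lra). unfold bmap, v. f_equal. f_equal. ring.
Qed.

Lemma traj_ok r1 r2 r3 dl s u : 0 < r1 < 1 -> 0 < r2 < 1 -> 0 < r3 < 1 -> r1 + r2 + r3 > 1 ->
  r1 + r2 <= 1 -> r1 + r3 <= 1 -> r2 + r3 <= 1 -> 0 < dl < 1 ->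
  0 < s < hm (theta r1 r2 r3) r1 (1 - r2) (1 - dl) ->
  0 <= u <= 1 ->
  trajectory r1 r2 r3 (dvec (dl, s, d3of r1 r2 r3 dl)) (tr r1 r2 r3 dl u).
Proof.
  intros h1 h2 h3 hs h12 h13 h23 hd Hs hu t.
  destruct (Nat.Even_or_Odd t) as [[n ->]|[n ->]].
  - rewrite tr_even. replace (S (2 * n)) with (S (2 * n)) by auto. rewrite tr_odd.
    apply phi_even; auto. apply itg_range; auto.
  - replace (2 * n + 1)%nat with (S (2 * n)) by lia. rewrite tr_odd.
    replace (S (S (2 * n))) with (2 * S n)%nat by lia. rewrite tr_even. simpl itg.
    apply phi_odd; auto. apply itg_range; auto.
Qed.


Lemma pigeon {A : Type} (l : list A) : forall (f : nat -> A), (forall k, In (f k) l) ->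
  exists m n, (m < n)%nat /\ f m = f n.
Proof.
  induction l as [|x l IH]; intros f Hf.
  - destruct (Hf 0%nat).
  - destruct (classic (exists k, f k = x)) as [[k0 Hk0]|Hno].
    + destruct (classic (exists k, (k0 < k)%nat /\ f k = x)) as [[k [Hk1 Hk2]]|Hno2].
      * exists k0, k. split; auto. congruence.
      * destruct (IH (fun j => f (S k0 + j)%nat)) as [m [n [Hmn E]]].
        { intro j. destruct (Hf (S k0 + j)%nat) as [E|E]; auto.
          exfalso. apply Hno2. exists (S k0 + j)%nat. split; auto. lia. }
        exists (S k0 + m)%nat, (S k0 + n)%nat. split; auto. lia.
    + apply IH. intro k. destruct (Hf k) as [E|E]; auto. exfalso. apply Hno. eauto.
Qed.

Theorem lemma5p1 (r1 r2 r3 : R)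
  (h1 : 0 < r1 < 1) (h2 : 0 < r2 < 1) (h3 : 0 < r3 < 1)
  (hsum : r1 + r2 + r3 > 1)
  (h12 : r1 + r2 <= 1) (h13 : r1 + r3 <= 1) (h23 : r2 + r3 <= 1) :
  uncountable3 (fun d : R * R * R =>
    (forall i, 0 < dvec d i < 1) /\
    exists i, infinite_pts
      (fun z => preimage r1 r2 r3 (dvec d) z (ptof (dvec d i) i))).
Proof.
  destruct exists_irrational as [w [Hw Hirr]].
  pose proof (CH_inst r1 r2 r3 h1 h2 h3 hsum h12 h13 h23) as HCH.
  destruct (core _ _ w HCH Hw Hirr) as [Hy0 [Hyr [Hdist Hbr]]].
  set (y := ys (amap r1 r2 r3) (bmap r1 r2 r3) w) in *.
  set (dl := y 0%nat) in *.
  assert (HT : 0 < theta r1 r2 r3) by (unfold theta; lra).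
  set (L := hm (theta r1 r2 r3) r1 (1 - r2) (1 - dl)).
  assert (HL : 0 < L < 1).
  { unfold L. split; [apply hm_pos|apply hm_range]; auto; lra. }
  assert (Hgy : forall k, gmap r1 r2 r3 dl (y (S k)) = y k).
  { intro k. unfold gmap. destruct (Hbr k) as [[E1 E2]|[E1 E2]]; destruct (Rle_dec _ _); auto; lra. }
  assert (Hit : forall j k, itg r1 r2 r3 dl j (y (j + k)%nat) = y k).
  { induction j as [|j IH]; intro k; [auto|]. simpl itg.
    replace (S (j + k)) with (j + S k)%nat by lia. rewrite IH. apply Hgy. }
  assert (Good : forall s, 0 < s < L ->
    (forall i, 0 < dvec (dl, s, d3of r1 r2 r3 dl) i < 1) /\
    exists i, infinite_pts (fun z => preimage r1 r2 r3 (dvec (dl, s, d3of r1 r2 r3 dl)) z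
        (ptof (dvec (dl, s, d3of r1 r2 r3 dl) i) i))).
  { intros s Hs. split.
    - intro i. destruct i; simpl; try lra. unfold d3of.
      pose proof (hm_range (theta r1 r2 r3) r1 (1 - r3) dl HT ltac:(lra) ltac:(lra)).
      pose proof (hm_pos (theta r1 r2 r3) r1 (1 - r3) dl HT ltac:(lra) ltac:(lra)). lra.
    - exists i1. intros [l Hl].
      destruct (pigeon l (fun k => ptof (y (S k)) i1)) as [m [n [Hmn E]]].
      + intro k. apply Hl. exists (tr r1 r2 r3 dl (y (S k))). split; [|split].
        * apply traj_ok; auto.
        * unfold tr. simpl. auto.
        * exists (2 * S k)%nat. split; [lia|]. rewrite tr_even.
          replace (S k) with (S k + 0)%nat at 2 by lia. rewrite Hit. simpl. auto.
      + apply (Hdist (S m) (S n)); [lia|].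
        apply (f_equal c3) in E. simpl in E. lra. }
  intros [G HG].
  apply (no_inj_interval 0 L (fun s => G (dl, s, d3of r1 r2 r3 dl))); [lra|].
  intros s s' Hs Hs' E. specialize (HG _ _ (Good s Hs) (Good s' Hs') E).
  injection HG. auto.
Qed.
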